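(* Let $q=5^m$ with $m$ even, let $\alpha\in\mathbb{F}_q$ be a non-square, and let $Z\in\mathbb{F}_{q^2}\setminus\mathbb{F}_q$ satisfy $Z^2=\alpha$. Let $f(x)=x^{q+2}$ on $\mathbb{F}_{q^2}$ and for $b\in\mathbb{F}_{q^2}$ put $\beta(b)=\beta_f(1,\tfrac14 b)$. Then for every $d\in\mathbb{F}_q^*$: $\beta(2dZ)=3$ if $d^2\alpha+2\in C_0$, and $\beta(2dZ)\in\{0,3\}$ if $d^2\alpha+2\in C_1$.
   Context: $\beta_f(a,b)$ is the number of $(x,y)\in\mathbb{F}_{q^2}^2$ with $f(x)-f(y)=b$ and $f(x+a)-f(y+a)=b$. $C_0$ (resp. $C_1$) denotes the set of nonzero squares (resp. non-squares) in $\mathbb{F}_q^*$. *)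

(* Defs.v *)
From HB Require Import structures.
From mathcomp Require Import all_boot all_order all_algebra all_field.
Set Implicit Arguments. Unset Strict Implicit. Unset Printing Implicit Defensive.
Import Order.TTheory GRing.Theory Num.Theory.
Local Open Scope ring_scope.

(* L plays the role of F_{q^2}; F_q is the subfield {x | x^q = x}. *)
Definition inFq (L : finFieldType) (q : nat) (x : L) : bool := x ^+ q == x.

Definition sqFq (L : finFieldType) (q : nat) (x : L) : Prop :=
  exists y : L, inFq q y /\ y ^+ 2 = x.

Definition C0 (L : finFieldType) (q : nat) (x : L) : Prop :=
  inFq q x /\ x != 0 /\ sqFq q x.
Definition C1 (L : finFieldType) (q : nat) (x : L) : Prop :=
  inFq q x /\ x != 0 /\ ~ sqFq q x.

Definition fpow (L : finFieldType) (q : nat) (x : L) : L := x ^+ (q + 2).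

Definition beta_f (L : finFieldType) (f : L -> L) (a b : L) : nat :=
  #|[set p : L * L | (f p.1 - f p.2 == b) && (f (p.1 + a) - f (p.2 + a) == b)]|.

Definition beta (L : finFieldType) (q : nat) (b : L) : nat :=
  beta_f (@fpow L q) 1 (b / 4%:R).

(* Main.v *)
Require Import Defs.
From HB Require Import structures.
From mathcomp Require Import all_boot all_order all_algebra all_field all_solvable.
From mathcomp Require Import ring zify.
Import Order.TTheory GRing.Theory Num.Theory.
Local Open Scope ring_scope.

Section Main.
Variable L : finFieldType.
Variable m : nat.
Hypothesis HL : #|L| = ((5 ^ m) ^ 2)%N.
Hypothesis m0 : (0 < m)%N.
Hypothesis mev : ~~ odd m.

Local Notation q := (5 ^ m)%N.
Local Notation n := (#|L|.-1).
Local Notation h := ((5 ^ m).-1 %/ 2)%N.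


Lemma ch5 : (5%N \in [pchar L]).
Proof. apply: (@card_finPcharP _ 5 (m * 2)); first by rewrite HL expnM. by []. Qed.

Lemma c5 : (5%:R : L) = 0.
Proof. exact: pcharf0 ch5. Qed.

Lemma qnat : [pchar L].-nat q.
Proof.
rewrite (eq_pnat _ (pcharf_eq ch5)). by rewrite pnatX pnat_id.
Qed.

Lemma cjD (x y : L) : (x + y) ^+ q = x ^+ q + y ^+ q.
Proof. exact: exprDn_pchar qnat. Qed.

Lemma cjN (x : L) : (- x) ^+ q = - x ^+ q.
Proof. exact: exprNn_pchar qnat. Qed.

Lemma cjB (x y : L) : (x - y) ^+ q = x ^+ q - y ^+ q.
Proof. by rewrite cjD cjN. Qed.

Lemma cjM (x y : L) : (x * y) ^+ q = x ^+ q * y ^+ q.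
Proof. exact: exprMn. Qed.

Lemma cjn k : (k%:R : L) ^+ q = k%:R.
Proof. elim: k => [|k IH]; first by rewrite expr0n expn_eq0.
by rewrite -addn1 natrD cjD IH expr1n.
Qed.

Lemma cjK (x : L) : (x ^+ q) ^+ q = x.
Proof. by rewrite -exprM -[(q * q)%N]/(q ^ 2)%N -HL expf_card. Qed.

Lemma cjV (x : L) : (x ^-1) ^+ q = (x ^+ q)^-1.
Proof. exact: exprVn. Qed.

Lemma cjX (x : L) k : (x ^+ k) ^+ q = (x ^+ q) ^+ k.
Proof. by rewrite -!exprM mulnC. Qed.



Lemma nz_pow (x : L) : x != 0 -> x ^+ n = 1.
Proof.
move=> x0; have := expf_card x.
have hn : #|L| = n.+1 by rewrite prednK // (leq_trans _ (finNzRing_gt1 L)).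
rewrite hn exprS => h; apply: (mulIf x0); by rewrite mul1r mulrC.
Qed.

Lemma n_gt0 : (0 < n)%N.
Proof. have := finNzRing_gt1 L; by case: #|L| => [|[|k]]. Qed.

Lemma gen : exists g : L, n.-primitive_root g.
Proof.
pose rs := [seq x <- enum L | x != 0].
have : has n.-primitive_root rs.
  apply: has_prim_root; first exact: n_gt0.
  - apply/allP => x; rewrite mem_filter => /andP[x0 _].
    by rewrite unity_rootE nz_pow.
  - by rewrite filter_uniq ?enum_uniq.
  - rewrite size_filter.
    have := count_predC (pred1 (0:L)) (enum L).
    have -> : count (pred1 (0 : L)) (enum L) = 1%N.
      by rewrite count_uniq_mem ?enum_uniq ?mem_enum.
    rewrite -cardE => <-.
    by rewrite add1n /=.
by case/hasP => g _ Hg; exists g.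
Qed.

Lemma root_ex (e : nat) (w : L) : (0 < e)%N -> (e %| n)%N -> w != 0 ->
  w ^+ (n %/ e) = 1 -> exists s, s ^+ e = w.
Proof.
move=> e0 en w0 hw.
have [g Hg] := gen.
have [i Hi] := @prim_rootP _ _ _ Hg w (@nz_pow w w0).
move: hw; rewrite Hi -exprM => /eqP.
rewrite -(expr0 g) (eq_prim_root_expr Hg) mod0n => hd0.
have hd : (n %| i * (n %/ e))%N := hd0.
have ne : n = (n %/ e * e)%N by rewrite divnK.
have ie : (e %| i)%N.
  have : (e * (n %/ e) %| i * (n %/ e))%N by rewrite mulnC -ne.
  rewrite dvdn_pmul2r //.
  by rewrite divn_gt0 // dvdn_leq // n_gt0.
exists (g ^+ (i %/ e)); by rewrite -exprM divnK.
Qed.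



Lemma q_odd : odd q.
Proof. by rewrite oddX orbT. Qed.

Lemma q_ge5 : (5 <= q)%N.
Proof. by rewrite -{1}(expn1 5) leq_pexp2l. Qed.

Lemma q_h : (q.-1 = 2 * h)%N.
Proof.
have := q_odd; have := q_ge5; move: q => Q.
case: Q => [//|Q] _ /=; move=> oQ.
rewrite mulnC divnK //. by rewrite dvdn2.
Qed.

Lemma h_gt0 : (0 < h)%N.
Proof. have := q_h; have := q_ge5; lia. Qed.

Lemma n_q : (#|L|.-1 = q.-1 * q.+1)%N.
Proof. rewrite HL; have := q_ge5; move: q => Q; case: Q => [//|Q] _. 
rewrite /=; lia. Qed.

Lemma q24 : (24 %| q.-1)%N.
Proof.
have hm : m = (2 * m./2)%N.
  by rewrite -[m in LHS]odd_double_half (negbTE mev) add0n -muln2 mulnC.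
rewrite hm expnM.
have h1 : (25 ^ (m./2) = 1 %[mod 24])%N.
  by rewrite -modnXm /= exp1n.
have h2 : (0 < 25 ^ (m./2))%N by rewrite expn_gt0.
rewrite -[(5 ^ 2)%N]/25%N.
move: h1 h2; move: (25 ^ m./2)%N => Q.
case: Q => [//|Q] /= h1 _.
move: h1; rewrite -addn1 -modnDm /= => h1.
have : (Q %% 24 = 0)%N.
  move: h1; have := ltn_pmod Q (isT : (0 < 24)%N); lia.
by move=> h3; rewrite /dvdn h3.
Qed.

Lemma inFqE (y : L) : inFq q y = (y ^+ q == y).
Proof. by []. Qed.

Lemma euler (a : L) : a != 0 -> a ^+ h = 1 -> exists y, inFq q y /\ y ^+ 2 = a.
Proof.
move=> a0 ha.
have [g Hg] := gen.
have [[i _] /= Hi] := @prim_rootP _ _ _ Hg a (@nz_pow a a0).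
move: ha; rewrite Hi -exprM => /eqP.
rewrite -(expr0 g) (eq_prim_root_expr Hg) mod0n => hd0.
have hd : (#|L|.-1 %| i * h)%N := hd0.
have n_h : (#|L|.-1 = 2 * h * q.+1)%N.
  rewrite n_q; congr (_ * _)%N; exact: q_h.
rewrite n_h in hd.
have hi : (2 * q.+1 %| i)%N.
  have e1 : (2 * h * q.+1 = h * (2 * q.+1))%N by nia.
  have e2 : (i * h = h * i)%N by nia.
  move: hd; rewrite e1 e2 dvdn_pmul2l //; exact: h_gt0.
case/dvdnP: hi => k hk.
exists (g ^+ (k * q.+1)); split.
  rewrite inFqE -exprM (eq_prim_root_expr Hg) n_q.
  apply/eqP.
  have -> : (k * q.+1 * q = (k * q.+1) + k * (q.-1 * q.+1))%N.
    have := q_ge5; move: q => Q; case: Q => [//|Q] _ /=; lia.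
  by rewrite addnC modnMDl.
by rewrite -exprM hk; congr (g ^+ _); nia.
Qed.


Lemma c_nz k : ~~ (5 %| k)%N -> (k%:R : L) != 0.
Proof. by rewrite (dvdn_pcharf ch5). Qed.

Lemma FqE {y : L} : inFq q y -> y ^+ q = y.
Proof. by move/eqP. Qed.

Lemma inFqD {x y : L} : inFq q x -> inFq q y -> inFq q (x + y).
Proof. by move=> /eqP hx /eqP hy; apply/eqP; rewrite cjD hx hy. Qed.
Lemma inFqM {x y : L} : inFq q x -> inFq q y -> inFq q (x * y).
Proof. by move=> /eqP hx /eqP hy; apply/eqP; rewrite cjM hx hy. Qed.
Lemma inFqN {x : L} : inFq q x -> inFq q (- x).
Proof. by move=> /eqP hx; apply/eqP; rewrite cjN hx. Qed.
Lemma inFqB {x y : L} : inFq q x -> inFq q y -> inFq q (x - y).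
Proof. by move=> hx hy; apply: inFqD => //; apply: inFqN. Qed.
Lemma inFqV {x : L} : inFq q x -> inFq q (x ^-1).
Proof. by move=> /eqP hx; apply/eqP; rewrite cjV hx. Qed.
Lemma inFqn k : inFq q (k%:R : L).
Proof. by apply/eqP; rewrite cjn. Qed.
Lemma inFqX {x : L} k : inFq q x -> inFq q (x ^+ k).
Proof. by move=> /eqP hx; apply/eqP; rewrite cjX hx. Qed.

Lemma Fq_pow1 {a : L} : inFq q a -> a != 0 -> a ^+ q.-1 = 1.
Proof.
move=> /eqP ha a0; apply: (mulIf a0); rewrite mul1r -exprSr prednK //.
by rewrite expn_gt0.
Qed.

Lemma nonsq_h {a : L} : inFq q a -> a != 0 -> ~ sqFq q a -> a ^+ h = -1.
Proof.
move=> ha a0 ns.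
have : (a ^+ h) ^+ 2 == 1 by rewrite -exprM mulnC -q_h Fq_pow1.
rewrite sqrf_eq1 => /orP[/eqP e|/eqP //].
by case: ns; apply: euler.
Qed.

Lemma sq_mul_nonsq {a b : L} : inFq q a -> a != 0 -> ~ sqFq q a ->
  inFq q b -> b != 0 -> ~ sqFq q b -> sqFq q (a * b).
Proof.
move=> ha a0 na hb b0 nb; apply: euler; first by rewrite mulf_neq0.
by rewrite exprMn (nonsq_h ha a0 na) (nonsq_h hb b0 nb) mulrNN mulr1.
Qed.

Lemma sq2 : sqFq q (2%:R : L).
Proof.
apply: euler; first exact: c_nz.
have : (4 %| h)%N.
  have hd := q24; rewrite q_h in hd.
  have : (2 * 4 %| 2 * h)%N by apply: dvdn_trans _ hd.
  by rewrite dvdn_pmul2l.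
case/dvdnP => k ->; rewrite mulnC exprM.
have -> : (2%:R : L) ^+ 4 = 1.
  by rewrite -natrX -[(2 ^ 4)%N]/(1 + 3 * 5)%N natrD natrM c5 mulr0 addr0.
by rewrite expr1n.
Qed.

Ltac ring5 E := apply/eqP; rewrite -subr_eq0; apply/eqP;
  transitivity ((5%:R : L) * E); [ring | by rewrite c5 mul0r].

Variables (alpha Z : L).
Hypothesis Hal : C1 q alpha.
Hypothesis HZ : ~~ inFq q Z.
Hypothesis HZ2 : Z ^+ 2 = alpha.

Lemma alFq : inFq q alpha. Proof. by case: Hal. Qed.
Lemma al0 : alpha != 0. Proof. by case: Hal => _ []. Qed.
Lemma alns : ~ sqFq q alpha. Proof. by case: Hal => _ []. Qed.

Lemma Z0 : Z != 0.
Proof. apply: contraNneq HZ => ->; by rewrite /inFq expr0n expn_eq0. Qed.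

Lemma Zq : Z ^+ q = - Z.
Proof.
have h1 : (Z ^+ q) ^+ 2 = Z ^+ 2 by rewrite -cjX HZ2 (FqE alFq).
have : (Z ^+ q - Z) * (Z ^+ q + Z) == 0.
  by apply/eqP; rewrite -subr_sqr h1 subrr.
rewrite mulf_eq0 => /orP[|]; first by rewrite subr_eq0 => hz; case/negP: HZ.
by rewrite addr_eq0 => /eqP.
Qed.

Lemma indep {a b : L} : inFq q a -> inFq q b -> a + b * Z = 0 -> a = 0 /\ b = 0.
Proof.
move=> ha hb e.
have b0 : b = 0.
  apply/eqP; apply: contraNT HZ => b0.
  have -> : Z = - a / b.
    have e' : b * Z = - a by apply/eqP; rewrite -addr_eq0 addrC e.
    by rewrite -e' [b * Z]mulrC mulfK.
  by apply: inFqM; [apply: inFqN | apply: inFqV].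
split=> //; by move: e; rewrite b0 mul0r addr0.
Qed.

Lemma decomp (X : L) : exists u v, [/\ inFq q u, inFq q v & X = u + v * Z].
Proof.
exists (3%:R * (X + X ^+ q)), (3%:R * (X - X ^+ q) / Z); split.
- apply/eqP; by rewrite cjM cjn cjD cjK addrC.
- apply/eqP; rewrite cjM cjM cjV cjn Zq cjB cjK.
  rewrite invrN mulrN -mulNr; congr (_ * _); by rewrite -mulrN opprB.
- rewrite -mulrA mulVf ?Z0 // mulr1.
  move: (X ^+ q) => Xb; ring5 (- X).
Qed.

Lemma nonsq_key {w e s : L} : inFq q w -> inFq q e -> inFq q s -> s != 0 ->
  w ^+ 2 = s ^+ 2 * alpha * e ^+ 2 -> e = 0.
Proof.
move=> hw he hs s0 E; apply/eqP; apply: contraT => e0.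
suff : False by []. apply: alns; exists (w / (s * e)); split.
  by apply: inFqM => //; apply: inFqV; apply: inFqM.
rewrite expr_div_n E exprMn; field.
by rewrite s0 e0.
Qed.

Lemma sqrt2 : exists s : L, [/\ inFq q s, s != 0 & s ^+ 2 = 2%:R].
Proof.
have [s [hs e]] := sq2; exists s; split => //.
apply/eqP => s0; have := @c_nz 2 isT; by rewrite -e s0 expr0n eqxx.
Qed.

Lemma two_eq0 (x : L) : x + x = 0 -> x = 0.
Proof. rewrite -mulr2n -mulr_natl => /eqP; rewrite mulf_eq0 (negbTE (@c_nz 2 isT)) => /eqP //. Qed.

Lemma sq0 (x : L) : x ^+ 2 = 0 -> x = 0.
Proof. by move/eqP; rewrite sqrf_eq0 => /eqP. Qed.

Lemma aux1 (X Xb Y Yb : L) :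
  2%:R * X * Xb + X ^+ 2 = 2%:R * Y * Yb + Y ^+ 2 ->
  2%:R * X * Xb + Xb ^+ 2 = 2%:R * Y * Yb + Yb ^+ 2 ->
  (Y * Yb - X * Xb) * (2%:R * Y ^+ 2 + 2%:R * Yb ^+ 2 - 3%:R * X * Xb) = 0.
Proof.
move=> hE hE'.
have h1 : X ^+ 2 = 2%:R * Y * Yb + Y ^+ 2 - 2%:R * X * Xb by rewrite -hE; ring.
have h2 : Xb ^+ 2 = 2%:R * Y * Yb + Yb ^+ 2 - 2%:R * X * Xb by rewrite -hE'; ring.
have h3 : (X * Xb) ^+ 2 - (2%:R * Y * Yb + Y ^+ 2 - 2%:R * X * Xb) *
   (2%:R * Y * Yb + Yb ^+ 2 - 2%:R * X * Xb) = 0 by rewrite exprMn h1 h2 subrr.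
transitivity (4%:R * ((X * Xb) ^+ 2 - (2%:R * Y * Yb + Y ^+ 2 - 2%:R * X * Xb) *
   (2%:R * Y * Yb + Yb ^+ 2 - 2%:R * X * Xb)) + 5%:R * (- (7%:R * X * Xb * Y * Yb) - (2%:R * X * Xb * Y ^+ 2) - (2%:R * X * Xb * Yb ^+ 2) + (3%:R * X ^+ 2 * Xb ^+ 2) + (2%:R * Y * Yb ^+ 3) + (4%:R * Y ^+ 2 * Yb ^+ 2) + (2%:R * Y ^+ 3 * Yb))).
  ring.
by rewrite h3 c5 !mulr0 !mul0r addr0.
Qed.

Lemma aux2 (X Xb Y Yb : L) :
  2%:R * Y ^+ 2 + 2%:R * Yb ^+ 2 - 3%:R * X * Xb = 0 ->
  2%:R * X ^+ 2 + 2%:R * Xb ^+ 2 - 3%:R * Y * Yb = 0 ->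
  (Y + Yb) ^+ 2 = 3%:R * (X - Xb) ^+ 2 /\ (Y - Yb) ^+ 2 = 2%:R * (X + Xb) ^+ 2.
Proof.
move=> hA hB; split; apply/eqP; rewrite -subr_eq0; apply/eqP.
  transitivity (3%:R * (2%:R * Y ^+ 2 + 2%:R * Yb ^+ 2 - 3%:R * X * Xb) +
     1 * (2%:R * X ^+ 2 + 2%:R * Xb ^+ 2 - 3%:R * Y * Yb) + 5%:R *
     ((3%:R * X * Xb) - (X ^+ 2) - (Xb ^+ 2) + (Y * Yb) - (Y ^+ 2) - (Yb ^+ 2))).
    ring.
  by rewrite hA hB c5 !mulr0 !mul0r !addr0.
transitivity (3%:R * (2%:R * Y ^+ 2 + 2%:R * Yb ^+ 2 - 3%:R * X * Xb) +
   4%:R * (2%:R * X ^+ 2 + 2%:R * Xb ^+ 2 - 3%:R * Y * Yb) + 5%:R *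
   ((X * Xb) - (2%:R * X ^+ 2) - (2%:R * Xb ^+ 2) + (2%:R * Y * Yb) - (Y ^+ 2) - (Yb ^+ 2))).
  ring.
by rewrite hA hB c5 !mulr0 !mul0r !addr0.
Qed.

Lemma imag_part (X : L) : inFq q ((X - X ^+ q) / Z) /\ X - X ^+ q = ((X - X ^+ q) / Z) * Z.
Proof.
split; last by rewrite mulfVK ?Z0.
apply/eqP; rewrite cjM cjV Zq cjB cjK invrN mulrN -mulNr opprB //.
Qed.

Lemma real_part (X : L) : inFq q (X + X ^+ q).
Proof. by apply/eqP; rewrite cjD cjK addrC. Qed.

Lemma sqrt3 : exists s : L, [/\ inFq q s, s != 0 & s ^+ 2 = 3%:R].
Proof.
have [s [hs s0 e]] := sqrt2; exists (2%:R * s); split.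
- by apply: inFqM => //; apply: inFqn.
- by rewrite mulf_neq0 // c_nz.
- by rewrite exprMn e; ring5 (1 : L).
Qed.

Lemma sq_eq (X Y : L) :
  2%:R * X * X ^+ q + X ^+ 2 = 2%:R * Y * Y ^+ q + Y ^+ 2 -> X ^+ 2 = Y ^+ 2.
Proof.
move=> hE.
have hE' : 2%:R * X * X ^+ q + (X ^+ q) ^+ 2 = 2%:R * Y * Y ^+ q + (Y ^+ q) ^+ 2.
  have := congr1 (fun t => t ^+ q) hE.
  rewrite !cjD !cjM !cjK !cjn => H.
  transitivity (2%:R * X ^+ q * X + X ^+ q * X ^+ q); first ring.
  rewrite H; ring.
have [s3 [hs3 s30 es3]] := sqrt3.
have [i1 e1] := imag_part X.
have [i2 e2] := imag_part Y.
have r1 := real_part X. have r2 := real_part Y.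
move: (X ^+ q) (Y ^+ q) hE hE' i1 e1 i2 e2 r1 r2 => Xb Yb hE hE' i1 e1 i2 e2 r1 r2.
have T1 := @aux1 X Xb Y Yb hE hE'.
have T2 := @aux1 Y Yb X Xb (esym hE) (esym hE').
move/eqP: T1; rewrite mulf_eq0 => /orP[d0|hA].
  move: d0; rewrite subr_eq0 => /eqP d0.
  by move: hE; rewrite -!mulrA d0 => /addrI.
move/eqP: T2; rewrite mulf_eq0 => /orP[d0'|hB].
  move: d0'; rewrite subr_eq0 => /eqP d0'.
  by move: hE; rewrite -!mulrA d0' => /addrI.
move/eqP: hA => hA; move/eqP: hB => hB.
have [k1 k2] := @aux2 X Xb Y Yb hA hB.
have ee1 : (X - Xb) / Z = 0.
  apply: (nonsq_key r2 i1 hs3 s30).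
  by rewrite k1 {1}e1 es3 -HZ2; ring.
have ee2 : (Y - Yb) / Z = 0.
  apply: (nonsq_key r1 i2 hs3 s30).
  have -> : (X + Xb) ^+ 2 = 3%:R * (Y - Yb) ^+ 2.
    by rewrite k2; ring5 (- (X + Xb) ^+ 2).
  by rewrite {1}e2 es3 -HZ2; ring.
move: e1 e2; rewrite ee1 ee2 !mul0r => /eqP; rewrite subr_eq0 => /eqP hX.
move=> /eqP; rewrite subr_eq0 => /eqP hY.
move: k1 k2; rewrite hX hY !subrr expr0n /= mulr0 => k1 k2.
have hy : Yb = 0 by apply: two_eq0; apply: sq0.
have hx : Xb = 0.
  apply: two_eq0; apply: sq0; apply/eqP; move/eqP: k2; rewrite eq_sym mulf_eq0.
  by rewrite (negbTE (@c_nz 2 isT)).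
by rewrite hx hy.
Qed.

Variable d : L.
Hypothesis Hd : inFq q d.
Hypothesis d0 : d != 0.

Definition Fc (X : L) := 2%:R * X ^+ 2 * X ^+ q + 3%:R * X ^+ q + X.
Definition cc : L := (2%:R * d * Z) / 4%:R.

Lemma cE : cc = 3%:R * d * Z.
Proof.
have h4 : (4%:R : L) != 0 by apply: c_nz.
apply: (mulIf h4); rewrite /cc mulfVK //; ring5 (- (2%:R * d * Z)).
Qed.

Lemma cc0 : cc != 0.
Proof. by rewrite cE !mulf_neq0 ?Z0 ?c_nz. Qed.

Lemma fpowE (x : L) : fpow q x = x ^+ q * x ^+ 2.
Proof. by rewrite /fpow exprD. Qed.

Lemma f_odd (x : L) : fpow q (- x) = - fpow q x.
Proof. by rewrite !fpowE cjN sqrrN mulNr. Qed.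

Lemma f_sum (X : L) : fpow q (X - 3%:R) + fpow q (X + 3%:R) = Fc X.
Proof.
rewrite !fpowE cjB cjD cjn /Fc; move: (X ^+ q) => Xb.
ring5 ((7%:R * X) + (3%:R * Xb)).
Qed.

Lemma f_diff (X : L) : fpow q (X + 3%:R) - fpow q (X - 3%:R) =
  2%:R * X * X ^+ q + X ^+ 2 + 4%:R.
Proof.
rewrite !fpowE cjB cjD cjn; move: (X ^+ q) => Xb.
ring5 ((10%:R) + (2%:R * X * Xb) + (X ^+ 2)).
Qed.

Lemma pair_char (x y : L) :
  ((fpow q x - fpow q y == cc) && (fpow q (x + 1) - fpow q (y + 1) == cc)) =
  (y == - x - 1) && (Fc (x + 3%:R) == cc).
Proof.
have [X ->] : exists X, x = X - 3%:R by exists (x + 3%:R); rewrite addrK.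
have [Y ->] : exists Y, y = Y - 3%:R by exists (y + 3%:R); rewrite addrK.
have ex1 : X - 3%:R + 1 = X + 3%:R by ring5 (-1 : L).
have ey1 : Y - 3%:R + 1 = Y + 3%:R by ring5 (-1 : L).
rewrite ex1 ey1 subrK.
have hyy : (Y - 3%:R == - (X - 3%:R) - 1) = (Y == - X).
  apply/eqP/eqP => h.
    apply/eqP; rewrite -subr_eq0; apply/eqP.
    transitivity ((Y - 3%:R) - (- (X - 3%:R) - 1) + 5%:R); first ring.
    by rewrite h subrr c5 addr0.
  rewrite h; ring5 (-1 : L).
rewrite hyy.
apply/idP/idP.
- case/andP => /eqP e1 /eqP e2.
  have hG : 2%:R * X * X ^+ q + X ^+ 2 = 2%:R * Y * Y ^+ q + Y ^+ 2.
    apply: (@addIr _ 4%:R); rewrite -!f_diff.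
    apply/eqP; rewrite -subr_eq0; apply/eqP.
    transitivity ((fpow q (X + 3%:R) - fpow q (Y + 3%:R)) -
                  (fpow q (X - 3%:R) - fpow q (Y - 3%:R))); first ring.
    by rewrite e1 e2 subrr.
  have := @sq_eq X Y hG; move/eqP; rewrite -subr_eq0 subr_sqr mulf_eq0 => /orP[|].
    rewrite subr_eq0 => /eqP hXY; move: e1; rewrite hXY subrr => h0.
    by move: cc0; rewrite -h0 eqxx.
  rewrite addr_eq0 => /eqP hXY.
  have hYX : Y = - X by rewrite hXY opprK.
  apply/andP; split; first by rewrite hYX.
  rewrite -f_sum; apply/eqP; rewrite -e1 hYX.
  have -> : - X - 3%:R = - (X + 3%:R) by ring.
  by rewrite f_odd opprK.
- case/andP => /eqP hy /eqP hF.
  rewrite hy -f_sum in hF *.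
  have -> : - X - 3%:R = - (X + 3%:R) by ring.
  have -> : - X + 3%:R = - (X - 3%:R) by ring.
  rewrite !f_odd !opprK hF addrC hF !eqxx //.
Qed.

Definition Tset := [set X : L | Fc X == cc].

Lemma beta_card : beta q (2%:R * d * Z) = #|Tset|.
Proof.
rewrite /beta /beta_f -/cc.
have -> : [set p : L * L | (fpow q p.1 - fpow q p.2 == cc) &&
      (fpow q (p.1 + 1) - fpow q (p.2 + 1) == cc)] =
    [set (fun X => (X - 3%:R, - (X - 3%:R) - 1)) X | X in Tset].
  apply/setP => -[x y]; rewrite inE /= pair_char.
  apply/andP/imsetP.
    case=> /eqP hy hF; exists (x + 3%:R); first by rewrite inE.
    by rewrite addrK hy.
  case=> X; rewrite inE => hX [-> ->]; split; first by [].
  by rewrite subrK.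
rewrite card_imset //.
move=> X1 X2 [] /eqP; rewrite (inj_eq (addIr _)) => /eqP //.
Qed.

Lemma card3 (a b c : L) : a != b -> a != c -> b != c -> #|a |: [set b; c]| = 3%N.
Proof.
move=> ab ac bc; rewrite cardsU1 cards2 bc !inE negb_or ab ac //.
Qed.

Lemma cjuv (u v : L) : inFq q u -> inFq q v -> (u + v * Z) ^+ q = u - v * Z.
Proof. by move=> hu hv; rewrite cjD cjM (FqE hu) (FqE hv) Zq mulrN. Qed.

Definition NN (u v : L) := u ^+ 2 - alpha * v ^+ 2.

Lemma Fc_uv (u v : L) : inFq q u -> inFq q v ->
  Fc (u + v * Z) = u * (2%:R * NN u v - 1) + (v * (2%:R * NN u v + 3%:R)) * Z.
Proof.
move=> hu hv; rewrite /Fc cjuv // /NN -HZ2.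
ring5 ((- (Z * v) + (u))).
Qed.

Definition cub (v : L) := alpha * v ^+ 3 + v - d.

Lemma Fc_char (u v : L) : inFq q u -> inFq q v ->
  (Fc (u + v * Z) == cc) =
  (u * (2%:R * NN u v - 1) == 0) && (v * (2%:R * NN u v + 3%:R) - 3%:R * d == 0).
Proof.
move=> hu hv; rewrite Fc_uv // cE.
have hA : inFq q (u * (2%:R * NN u v - 1)).
  apply: inFqM => //; apply: inFqB; last exact: (inFqn 1).
  apply: inFqM; first exact: inFqn.
  by apply: inFqB; apply: inFqM => //; try apply: inFqX => //; exact: alFq.
have hB : inFq q (v * (2%:R * NN u v + 3%:R) - 3%:R * d).
  apply: inFqB; last by apply: inFqM => //; exact: inFqn.
  apply: inFqM => //; apply: inFqD; last exact: inFqn.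
  apply: inFqM; first exact: inFqn.
  by apply: inFqB; apply: inFqM => //; try apply: inFqX => //; exact: alFq.
apply/eqP/andP.
  move=> e.
  have e' : u * (2%:R * NN u v - 1) + (v * (2%:R * NN u v + 3%:R) - 3%:R * d) * Z = 0.
    transitivity ((u * (2%:R * NN u v - 1) + v * (2%:R * NN u v + 3%:R) * Z) - 3%:R * d * Z).
      ring.
    by rewrite e subrr.
  by have [-> ->] := indep hA hB e'.
case=> /eqP hA0 /eqP hB0.
apply/eqP; rewrite -subr_eq0; apply/eqP.
transitivity (u * (2%:R * NN u v - 1) + (v * (2%:R * NN u v + 3%:R) - 3%:R * d) * Z).
  ring.
by rewrite hA0 hB0 mul0r addr0.
Qed.

Lemma inFq_al : inFq q alpha. Proof. exact: alFq. Qed.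

Lemma sol_u0 (v : L) : inFq q v -> (Fc (v * Z) == cc) = (cub v == 0).
Proof.
move=> hv; rewrite -[v * Z]add0r Fc_char //; last exact: (inFqn 0).
rewrite mul0r eqxx /=.
have -> : v * (2%:R * NN 0 v + 3%:R) - 3%:R * d = 3%:R * cub v + 5%:R * (- (alpha * v ^+ 3)).
  rewrite /NN /cub; ring.
by rewrite c5 mul0r addr0 mulf_eq0 (negbTE (@c_nz 3 isT)).
Qed.

Lemma sol_unz (u v : L) : inFq q u -> inFq q v -> u != 0 ->
  (Fc (u + v * Z) == cc) = (v == 2%:R * d) && (u ^+ 2 == - (d ^+ 2 * alpha + 2%:R)).
Proof.
move=> hu hv u0; rewrite Fc_char // mulf_eq0 (negbTE u0) /=.
apply/andP/andP.
  case=> /eqP h1 /eqP h2.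
  have hv2 : v = 2%:R * d.
    apply/eqP; rewrite -subr_eq0; apply/eqP.
    transitivity (4%:R * (v * (2%:R * NN u v + 3%:R) - 3%:R * d) +
      (-4%:R * v) * (2%:R * NN u v - 1) + 5%:R * ((2%:R * d) - (3%:R * v))); first ring.
    by rewrite h1 h2 c5; ring.
  split; first by rewrite hv2.
  rewrite hv2 in h1; rewrite -subr_eq0 opprK; apply/eqP.
  transitivity (3%:R * (2%:R * NN u (2%:R * d) - 1) +
     5%:R * ((1%:R) + (5%:R * alpha * d ^+ 2) - (u ^+ 2))); first by rewrite /NN; ring.
  by rewrite h1 c5; ring.
case=> /eqP hv2 /eqP hu2; subst v.
have h1 : 2%:R * NN u (2%:R * d) - 1 = 0.
  transitivity (2%:R * (u ^+ 2 + (d ^+ 2 * alpha + 2%:R)) +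
     5%:R * (- (1%:R) - (2%:R * alpha * d ^+ 2))); first by rewrite /NN; ring.
  by rewrite hu2 c5 addNr; ring.
split; first by rewrite h1.
apply/eqP; transitivity (2%:R * d * (2%:R * NN u (2%:R * d) - 1) + 5%:R * d).
  ring.
by rewrite h1 c5; ring.
Qed.

Definition Dp (v0 : L) := - (3%:R * alpha ^+ 2 * v0 ^+ 2) - 4%:R * alpha.
Definition Kf (v0 : L) := 3%:R * alpha * v0 ^+ 2 + 1.
Definition Qd (v0 v : L) := alpha * v ^+ 2 + alpha * v0 * v + alpha * v0 ^+ 2 + 1.

Lemma cub_split (v0 v : L) : cub v - cub v0 = (v - v0) * Qd v0 v.
Proof. rewrite /cub /Qd; ring. Qed.

Lemma Qd_sq (v0 v : L) : 4%:R * alpha * Qd v0 v = (2%:R * alpha * v + alpha * v0) ^+ 2 - Dp v0.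
Proof. rewrite /Qd /Dp; ring. Qed.

Lemma disc_id (v0 : L) : cub v0 = 0 -> Dp v0 * Kf v0 ^+ 2 = 3%:R * alpha * (d ^+ 2 * alpha + 2%:R).
Proof.
move=> h.
have hd : d = alpha * v0 ^+ 3 + v0.
  by move/eqP: h; rewrite /cub subr_eq0 => /eqP <-.
rewrite hd /Dp /Kf.
ring5 ((- (2%:R * alpha) - (6%:R * alpha ^+ 2 * v0 ^+ 2) - (12%:R * alpha ^+ 3 * v0 ^+ 4) - (6%:R * alpha ^+ 4 * v0 ^+ 6))).
Qed.

Lemma root_cases (v0 v : L) : cub v0 = 0 -> cub v = 0 ->
  v = v0 \/ (2%:R * alpha * v + alpha * v0) ^+ 2 = Dp v0.
Proof.
move=> h0 h.
have : (v - v0) * Qd v0 v == 0 by rewrite -cub_split h h0 subrr.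
rewrite mulf_eq0 => /orP[|/eqP hq].
  by rewrite subr_eq0 => /eqP; left.
right; apply/eqP; rewrite -subr_eq0 -Qd_sq hq mulr0 //.
Qed.

Lemma cardano_alg (s t w wb : L) : s ^+ 3 = w -> t ^+ 3 = wb -> alpha * s * t = 3%:R ->
  alpha * (w + wb) = d -> cub (s + t) = 0.
Proof.
move=> h1 h2 h3 h4; rewrite /cub.
transitivity (alpha * (s ^+ 3 - w) + alpha * (t ^+ 3 - wb) + 3%:R * (s + t) * (alpha * s * t - 3%:R)
  + (alpha * (w + wb) - d) + 5%:R * (2%:R * (s + t))); first ring.
by rewrite h1 h2 h3 h4 c5 !subrr; ring.
Qed.

Lemma n_div3 : (3 %| n)%N /\ (n %/ 3 = q.+1 * (q.-1 %/ 3))%N.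
Proof.
have h3 : (3 %| q.-1)%N by apply: dvdn_trans q24.
rewrite n_q; split; first by apply: dvdn_mulr.
by rewrite [RHS]mulnC divn_mulAC.
Qed.

Lemma cardano (sg : L) : inFq q sg -> sg ^+ 2 = d ^+ 2 * alpha + 2%:R ->
  exists v0, inFq q v0 /\ cub v0 = 0.
Proof.
move=> hsg esg.
have a0 := al0.
pose w := 3%:R * (d / alpha + sg * Z / alpha ^+ 2).
pose wb := 3%:R * (d / alpha - sg * Z / alpha ^+ 2).
have hwq : w ^+ q = wb.
  rewrite /w /wb cjM cjn cjD !cjM !cjV (FqE Hd) (FqE hsg) Zq cjX (FqE alFq).
  by rewrite mulrN mulNr.
have hww : alpha ^+ 3 * (w * wb) = 2%:R.
  have -> : alpha ^+ 3 * (w * wb) = 9%:R * (alpha * d ^+ 2 - (d ^+ 2 * alpha + 2%:R)).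
    rewrite /w /wb -esg -HZ2; field; exact: Z0.
  ring5 (- (4%:R : L)).
have hwwb : alpha * (w + wb) = d.
  have -> : alpha * (w + wb) = 6%:R * d by rewrite /w /wb; field.
  by ring5 d.
have w0 : w != 0.
  apply/eqP => w0; move: hww; rewrite w0 mul0r mulr0 => /eqP.
  by rewrite eq_sym (negbTE (@c_nz 2 isT)).
have [n3 nd] := n_div3.
have hwq1 : w ^+ q.+1 = (3%:R / alpha) ^+ 3.
    rewrite exprS hwq.
    apply: (mulfI (expf_neq0 3 a0)); rewrite hww.
    rewrite exprMn exprVn mulrCA mulfV ?expf_neq0 // mulr1.
    by ring5 (- (5%:R : L)).
have hwn : w ^+ (n %/ 3) = 1.
  rewrite nd exprM hwq1 -exprM mulnC divnK; last by apply: dvdn_trans q24.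
  apply: Fq_pow1; first by apply: inFqM; [exact: inFqn | apply: inFqV; exact: alFq].
  by rewrite mulf_neq0 ?invr_eq0 // c_nz.
have [s hs] := @root_ex 3 w isT n3 w0 hwn.
pose rho := 2%:R * alpha * (s * s ^+ q).
have hsq3 : (s ^+ q) ^+ 3 = wb by rewrite -cjX hs hwq.
have hrho3 : rho ^+ 3 = 1.
  rewrite /rho !exprMn hs hsq3.
  transitivity (8%:R * (alpha ^+ 3 * (w * wb))); first ring.
  by rewrite hww; ring5 (3%:R : L).
have hrhoq : rho ^+ q = rho.
  by rewrite /rho !cjM cjn cjK (FqE alFq) [s ^+ q * s]mulrC.
pose s' := s * rho.
have hs'3 : s' ^+ 3 = w by rewrite /s' exprMn hs hrho3 mulr1.
have hs'q : s' ^+ q = s ^+ q * rho by rewrite /s' cjM hrhoq.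
have hst : alpha * s' * s' ^+ q = 3%:R.
  rewrite hs'q /s'.
  have e2 : 2%:R * (alpha * (s * rho) * (s ^+ q * rho)) - 1 = 0.
    transitivity (rho ^+ 3 - 1); first by rewrite /rho; ring.
    by rewrite hrho3 subrr.
  apply/eqP; rewrite -subr_eq0; apply/eqP.
  transitivity (3%:R * (2%:R * (alpha * (s * rho) * (s ^+ q * rho)) - 1) +
    5%:R * (- (alpha * (s * rho) * (s ^+ q * rho)))); first ring.
  by rewrite e2 c5; ring.
exists (s' + s' ^+ q); split.
  by apply/eqP; rewrite cjD cjK addrC.
apply: (@cardano_alg s' (s' ^+ q) w wb hs'3 _ hst hwwb).
by rewrite -cjX hs'3 hwq.
Qed.

Lemma eq_uv (u v u' v' : L) : inFq q u -> inFq q v -> inFq q u' -> inFq q v' ->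
  (u + v * Z == u' + v' * Z) = (u == u') && (v == v').
Proof.
move=> hu hv hu' hv'; apply/eqP/andP; last by case=> /eqP -> /eqP ->.
move=> e.
have e' : (u - u') + (v - v') * Z = 0.
  transitivity ((u + v * Z) - (u' + v' * Z)); first ring.
  by rewrite e subrr.
have [] := indep (inFqB hu hu') (inFqB hv hv') e'.
by move=> /eqP; rewrite subr_eq0 => -> /eqP; rewrite subr_eq0 => ->.
Qed.

Lemma twoFq : inFq q (2%:R : L). Proof. exact: inFqn. Qed.

Lemma count_C0 : C0 q (d ^+ 2 * alpha + 2%:R) -> #|Tset| = 3%N.
Proof.
case=> hF [hnz [sg [hsg esg]]].
have sg0 : sg != 0 by apply: contraNneq hnz => s0; rewrite -esg s0 expr0n.
have [v0 [hv0 cv0]] := @cardano sg hsg esg.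
have [s3 [hs3 s30 es3]] := sqrt3.
have uniq0 : forall v, inFq q v -> cub v = 0 -> v = v0.
  move=> v hv cv; case: (@root_cases v0 v cv0 cv) => // hw.
  have hwF : inFq q ((2%:R * alpha * v + alpha * v0) * Kf v0).
    apply: inFqM; first by apply: inFqD; apply: inFqM => //; try apply: inFqM;
      try exact: inFqn; exact: alFq.
    apply: inFqD; last exact: (inFqn 1).
    by apply: inFqM; [apply: inFqM; [exact: inFqn | exact: alFq] | exact: inFqX].
  have := @nonsq_key _ sg s3 hwF hsg hs3 s30.
  rewrite exprMn hw disc_id // -esg es3 => /(_ erefl) sgz.
  by move: sg0; rewrite sgz eqxx.
pose tau := 2%:R * sg.
have htau : inFq q tau by apply: inFqM => //; exact: inFqn.
have tau0 : tau != 0 by rewrite mulf_neq0 // c_nz.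
have etau : tau ^+ 2 = - (d ^+ 2 * alpha + 2%:R).
  rewrite /tau exprMn esg; ring5 (d ^+ 2 * alpha + 2%:R).
have h2d : inFq q (2%:R * d) by apply: inFqM => //; exact: inFqn.
have -> : Tset = (tau + (2%:R * d) * Z) |: [set (- tau) + (2%:R * d) * Z; 0 + v0 * Z].
  apply/setP => X; rewrite !inE.
  have [u [v [hu hv ->]]] := decomp X.
  rewrite !eq_uv //; try exact: inFqN; try exact: (inFqn 0).
  have [->|u0] := eqVneq u 0.
    rewrite add0r sol_u0 // [0 == tau]eq_sym (negbTE tau0) [0 == - tau]eq_sym oppr_eq0 (negbTE tau0) /=.
    apply/eqP/eqP; first exact: uniq0.
    by move=> ->.
  rewrite sol_unz //.
  rewrite -etau eqf_sqr.
  by case: (v == 2%:R * d); case: (u == tau); case: (u == - tau).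
apply: card3.
- rewrite eq_uv //; try exact: inFqN.
  rewrite eqxx andbT -subr_eq0 opprK.
  apply/negP => /eqP h; move: tau0; by rewrite (@two_eq0 tau h) eqxx.
- rewrite eq_uv //; last exact: (inFqn 0).
  by rewrite (negbTE tau0).
- rewrite eq_uv //; try exact: inFqN; last exact: (inFqn 0).
  by rewrite oppr_eq0 (negbTE tau0).
Qed.

Lemma Qd_self (v0 : L) : Qd v0 v0 = Kf v0.
Proof. rewrite /Qd /Kf; ring. Qed.

Lemma Qd_root (v0 v : L) : (2%:R * alpha * v + alpha * v0) ^+ 2 = Dp v0 -> Qd v0 v = 0.
Proof.
move=> h; have : 4%:R * alpha * Qd v0 v = 0 by rewrite Qd_sq h subrr.
move/eqP; rewrite !mulf_eq0 (negbTE (@c_nz 4 isT)) (negbTE al0) /= => /eqP //.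
Qed.

Lemma cub_from_Qd (v0 v : L) : cub v0 = 0 -> Qd v0 v = 0 -> cub v = 0.
Proof.
move=> h0 h; have := cub_split v0 v; rewrite h0 h mulr0 subr0 //.
Qed.

Lemma solve_v (x v0 : L) : 2%:R * alpha * ((x - alpha * v0) / (2%:R * alpha)) + alpha * v0 = x.
Proof.
have h : 2%:R * alpha != 0 by rewrite mulf_neq0 ?al0 // c_nz.
by rewrite mulrC mulfVK // subrK.
Qed.

Lemma solve_v_uniq (x v0 v : L) : 2%:R * alpha * v + alpha * v0 = x -> v = (x - alpha * v0) / (2%:R * alpha).
Proof.
have h : 2%:R * alpha != 0 by rewrite mulf_neq0 ?al0 // c_nz.
by move=> <-; rewrite addrK [_ * v]mulrC mulfK.
Qed.

Lemma no_unz (u : L) : C1 q (d ^+ 2 * alpha + 2%:R) -> inFq q u ->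
  u ^+ 2 != - (d ^+ 2 * alpha + 2%:R).
Proof.
case=> _ [_ ns] hu; apply/negP => /eqP e; apply: ns.
exists (2%:R * u); split; first by apply: inFqM => //; exact: inFqn.
rewrite exprMn e; ring5 (- (d ^+ 2 * alpha + 2%:R)).
Qed.

Lemma count_C1 : C1 q (d ^+ 2 * alpha + 2%:R) -> #|Tset| = 0%N \/ #|Tset| = 3%N.
Proof.
move=> hC1.
have [->|[X0 hX0]] := set_0Vmem Tset; first by left; rewrite cards0.
right.
have [hF [hnz hns]] := hC1.
have [s3 [hs3 s30 es3]] := sqrt3.
have [u0 [v0 [hu0 hv0 eX0]]] := decomp X0.
move: hX0; rewrite inE eX0 => hX0.
have u00 : u0 = 0.
  apply/eqP; apply: contraT => u0n.
  move: hX0; rewrite sol_unz // => /andP[_ e].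
  by move: (@no_unz u0 hC1 hu0); rewrite e.
move: hX0; rewrite u00 add0r sol_u0 // => /eqP cv0.
have [k0 [hk0 ek0]] := sq_mul_nonsq alFq al0 alns hF hnz hns.
pose k := s3 * k0.
have hk : inFq q k by apply: inFqM.
have ek : k ^+ 2 = Dp v0 * Kf v0 ^+ 2.
  by rewrite disc_id // /k exprMn ek0 es3 mulrA.
have k0n : k != 0.
  apply/eqP => kz; move: ek0; rewrite -(mulKf s30 k0) -/k kz mulr0 expr0n /= => /esym /eqP.
  by rewrite mulf_eq0 (negbTE al0) (negbTE hnz).
have K0 : Kf v0 != 0.
  apply/eqP => Kz; move: ek; rewrite Kz expr0n mulr0 => /eqP.
  by rewrite sqrf_eq0 (negbTE k0n).
pose r := k / Kf v0.
have hKf : inFq q (Kf v0).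
  apply: inFqD; last exact: (inFqn 1).
  by apply: inFqM; [apply: inFqM; [exact: inFqn | exact: alFq] | exact: inFqX].
have hr : inFq q r by apply: inFqM => //; apply: inFqV.
have r0 : r != 0 by rewrite mulf_neq0 ?invr_eq0.
have er : r ^+ 2 = Dp v0 by rewrite /r expr_div_n ek mulfK // expf_neq0.
have ha2 : inFq q (2%:R * alpha) by apply: inFqM; [exact: inFqn | exact: alFq].
have hav0 : inFq q (alpha * v0) by apply: inFqM => //; exact: alFq.
pose v1 := (r - alpha * v0) / (2%:R * alpha).
pose v2 := (- r - alpha * v0) / (2%:R * alpha).
have hv1 : inFq q v1 by apply: inFqM; [apply: inFqB | apply: inFqV].
have hv2 : inFq q v2 by apply: inFqM; [apply: inFqB => //; apply: inFqN | apply: inFqV].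
have Q1 : Qd v0 v1 = 0 by apply: Qd_root; rewrite solve_v er.
have Q2 : Qd v0 v2 = 0 by apply: Qd_root; rewrite solve_v sqrrN er.
have -> : Tset = (0 + v0 * Z) |: [set 0 + v1 * Z; 0 + v2 * Z].
  apply/setP => X; rewrite !inE.
  have [u [v [hu hv ->]]] := decomp X.
  have h00 : inFq q (0 : L) by exact: (inFqn 0).
  rewrite !eq_uv //.
  have [->|u0n] := eqVneq u 0; last first.
    rewrite sol_unz // /=.
    by rewrite (negbTE (@no_unz u hC1 hu)) andbF.
  rewrite add0r sol_u0 // /=.
  apply/eqP/idP.
    move=> cv; case: (@root_cases v0 v cv0 cv) => [->|hw]; first by rewrite eqxx.
    rewrite -er in hw; move/eqP: hw; rewrite eqf_sqr => /orP[] /eqP hw.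
      by rewrite (@solve_v_uniq _ _ _ hw) eqxx orbT.
    by rewrite (@solve_v_uniq _ _ _ hw) eqxx !orbT.
  case/or3P => /eqP ->; [exact: cv0 | exact: (@cub_from_Qd v0 v1 cv0 Q1) | exact: (@cub_from_Qd v0 v2 cv0 Q2)].
have h00 : inFq q (0 : L) by exact: (inFqn 0).
apply: card3; rewrite eq_uv // eqxx /=.
- apply/eqP => e; move: Q1; rewrite -e Qd_self => /eqP; by rewrite (negbTE K0).
- apply/eqP => e; move: Q2; rewrite -e Qd_self => /eqP; by rewrite (negbTE K0).
- apply/eqP => e.
  have e1 := solve_v r v0; have e2 := solve_v (- r) v0.
  rewrite -/v1 in e1; rewrite -/v2 in e2.
  have : r = - r.
    transitivity (2%:R * alpha * v1 + alpha * v0); first by rewrite e1.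
    by rewrite e e2.
  move/eqP; rewrite -subr_eq0 opprK => /eqP h; move: r0; by rewrite (@two_eq0 r h) eqxx.
Qed.

Lemma main_sec : (C0 q (d ^+ 2 * alpha + 2%:R) -> beta q (2%:R * d * Z) = 3%N) /\
    (C1 q (d ^+ 2 * alpha + 2%:R) ->
       beta q (2%:R * d * Z) = 0%N \/ beta q (2%:R * d * Z) = 3%N).
Proof. rewrite beta_card; split; [exact: count_C0 | exact: count_C1]. Qed.


End Main.

Theorem lemma11 (L : finFieldType) (m : nat) (alpha Z : L) :
  ~~ odd m -> (0 < m)%N ->
  #|L| = ((5 ^ m) ^ 2)%N ->
  C1 (5 ^ m) alpha ->
  ~~ inFq (5 ^ m) Z -> Z ^+ 2 = alpha ->
  forall d : L, inFq (5 ^ m) d -> d != 0 ->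
    (C0 (5 ^ m) (d ^+ 2 * alpha + 2%:R) -> beta (5 ^ m) (2%:R * d * Z) = 3%N) /\
    (C1 (5 ^ m) (d ^+ 2 * alpha + 2%:R) ->
       beta (5 ^ m) (2%:R * d * Z) = 0%N \/ beta (5 ^ m) (2%:R * d * Z) = 3%N).
Proof.
move=> hm hm0 HL Hal HZ HZ2 d Hd d0.
by eapply main_sec; eassumption.
Qed.
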